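(* There exist absolute constants $\bar\epsilon>0$ and $\delta>0$ such that for all real numbers $a,c$ and $b\ge 0$ satisfying $|ac|\le\bar\epsilon\,b^2$ and $|c|\le\bar\epsilon\,b^{3/2}$ one has $$\det S\ \ge\ \delta\, b^2(a^2+b),\qquad S=\frac13\begin{pmatrix}3&2a&-b\\ 2a&2(a^2+b)&-ab-3c\\ -b&-ab-3c&b^2-2ac\end{pmatrix}.$$ *)

(* Defs.v *)
From Stdlib Require Import Reals.
Open Scope R_scope.

Definition mat3 := nat -> nat -> R.

Definition det3 (M : mat3) : R :=
    M 0%nat 0%nat * M 1%nat 1%nat * M 2%nat 2%nat
  + M 0%nat 1%nat * M 1%nat 2%nat * M 2%nat 0%nat
  + M 0%nat 2%nat * M 1%nat 0%nat * M 2%nat 1%nat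
  - M 0%nat 2%nat * M 1%nat 1%nat * M 2%nat 0%nat
  - M 0%nat 1%nat * M 1%nat 0%nat * M 2%nat 2%nat
  - M 0%nat 0%nat * M 1%nat 2%nat * M 2%nat 1%nat.

Local Open Scope nat_scope.
Local Open Scope R_scope.
Definition Smat (a b c : R) : mat3 := fun i j =>
  / 3 *
  match i, j with
  | 0, 0 => 3
  | 0, 1 | 1, 0 => 2 * a
  | 0, 2 | 2, 0 => - b
  | 1, 1 => 2 * (a ^ 2 + b)
  | 1, 2 | 2, 1 => - (a * b) - 3 * c
  | 2, 2 => b ^ 2 - 2 * a * c
  | _, _ => 0
  end.

(* Main.v *)
Require Import Defs.
From Stdlib Require Import Reals Lra Psatz.
Open Scope R_scope.

Theorem mainTheorem3 :
  exists eps delta : R, 0 < eps /\ 0 < delta /\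
    forall a b c : R, 0 <= b ->
      Rabs (a * c) <= eps * b ^ 2 ->
      Rabs c <= eps * (b * sqrt b) ->
      det3 (Smat a b c) >= delta * b ^ 2 * (a ^ 2 + b).
Proof.
  exists (1/100), (1/54). split; [lra|split; [lra|]].
  intros a b c hb h1 h2.
  assert (hs : sqrt b * sqrt b = b) by (apply sqrt_sqrt; lra).
  assert (hs0 : 0 <= sqrt b) by apply sqrt_pos.
  assert (E : det3 (Smat a b c) =
    (a^2*b^2 + 4*b^3 - 4*a^2*(a*c) - 18*b*(a*c) - 27*c^2)/27).
  { unfold det3, Smat; simpl; field. }
  rewrite E.
  pose proof (Rle_abs (a*c)). pose proof (Rle_abs (-(a*c))).
  rewrite Rabs_Ropp in *.
  pose proof (Rle_abs c). pose proof (Rle_abs (-c)). rewrite Rabs_Ropp in *.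
  set (t := a*c) in *.
  assert (Hc2 : c^2 <= (1/100)^2 * b^3).
  { assert (Hx : Rabs c * Rabs c <= (1/100 * (b * sqrt b)) * (1/100 * (b * sqrt b))).
    { apply Rmult_le_compat; try apply Rabs_pos; lra. }
    replace (c^2) with (Rabs c * Rabs c).
    2:{ rewrite <- Rabs_mult. rewrite Rabs_right; [ring|]. nra. }
    replace (b^3) with (b*b*(sqrt b * sqrt b)) by (rewrite hs; ring). nra. }
  assert (P1 : 0 <= a^2 * (1/100*b^2 + t)) by (apply Rmult_le_pos; nra).
  assert (P2 : 0 <= b * (1/100*b^2 - t)) by (apply Rmult_le_pos; nra).
  nra.
Qed.
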